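(* Let $X$ be a totally disconnected compact Hausdorff space and let $A$ be a unital $C(X)$-algebra such that every fibre $A_x$, $x\in X$, is properly infinite. Then $A$ is properly infinite.
   Context: A $C(X)$-algebra is a $C^*$-algebra $A$ with a unital $*$-homomorphism from $C(X)$ into the center of the multiplier algebra of $A$; its fibre at $x$ is $A_x=A/C_0(X\setminus\{x\})A$. A unital $C^*$-algebra is properly infinite if there are mutually orthogonal projections $e,f$ with $e\sim1\sim f$ (Murray–von Neumann equivalence). *)

(* Defs.v *)
From HB Require Import structures.
From mathcomp Require Import all_boot all_order all_algebra.
From mathcomp Require Import all_classical all_reals topology normedtype.
From mathcomp.real_closed Require Import complex.

Set Implicit Arguments.
Unset Strict Implicit.
Unset Printing Implicit Defensive.

Import Order.TTheory GRing.Theory Num.Theory.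
Import numFieldTopology.Exports numFieldNormedType.Exports.
Local Open Scope ring_scope.

(* algebra is allowed.                                                      *)

Record UCstarAlg (R : realType) := {
  cs_car :> lmodType R[i];
  cs_mul : cs_car -> cs_car -> cs_car;
  cs_one : cs_car;
  cs_star : cs_car -> cs_car;
  cs_norm : cs_car -> R;
  cs_mulA : forall a b c, cs_mul a (cs_mul b c) = cs_mul (cs_mul a b) c;
  cs_mulDl : forall a b c, cs_mul (a + b) c = cs_mul a c + cs_mul b c;
  cs_mulDr : forall a b c, cs_mul a (b + c) = cs_mul a b + cs_mul a c;
  cs_mul1l : forall a, cs_mul cs_one a = a;
  cs_mul1r : forall a, cs_mul a cs_one = a;
  cs_scaleAl : forall (k : R[i]) a b, cs_mul (k *: a) b = k *: cs_mul a b;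
  cs_scaleAr : forall (k : R[i]) a b, cs_mul a (k *: b) = k *: cs_mul a b;
  cs_starD : forall a b, cs_star (a + b) = cs_star a + cs_star b;
  cs_starZ : forall (k : R[i]) a, cs_star (k *: a) = conjc k *: cs_star a;
  cs_starM : forall a b, cs_star (cs_mul a b) = cs_mul (cs_star b) (cs_star a);
  cs_starK : forall a, cs_star (cs_star a) = a;
  cs_norm_ge0 : forall a, 0 <= cs_norm a;
  cs_norm_eq0 : forall a, cs_norm a = 0 -> a = 0;
  cs_normD : forall a b, cs_norm (a + b) <= cs_norm a + cs_norm b;
  cs_normZ : forall (k : R[i]) a, cs_norm (k *: a) = Normc.normc k * cs_norm a;
  cs_normM : forall a b, cs_norm (cs_mul a b) <= cs_norm a * cs_norm b;
  cs_cstar : forall a, cs_norm (cs_mul (cs_star a) a) = cs_norm a ^+ 2;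
  cs_complete : forall u : nat -> cs_car,
    (forall e : R, 0 < e -> exists N : nat, forall m n : nat,
        (N <= m)%N -> (N <= n)%N -> cs_norm (u m - u n) < e) ->
    exists l : cs_car, forall e : R, 0 < e -> exists N : nat,
        forall n : nat, (N <= n)%N -> cs_norm (u n - l) < e
}.

Arguments cs_mul {R} _ _ _.
Arguments cs_one {R} _.
Arguments cs_star {R} _ _.
Arguments cs_norm {R} _ _.

(* Continuity of a complex-valued function on X: continuity of its real and *)
(* imaginary parts (C carries the topology of R x R).                       *)
Definition ccontinuous (R : realType) (X : topologicalType) (f : X -> R[i]) :=
  continuous (fun t : X => (complex.Re (f t) : R)) /\ continuous (fun t : X => (complex.Im (f t) : R)).

(* A unital C(X)-algebra structure: a unital *-homomorphism from C(X) into   *)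
(* the centre of A (A is unital, so its multiplier algebra is A itself).     *)
(* phi is a function on all of X -> C, constrained only on C(X).            *)
Definition is_CX_structure (R : realType) (X : topologicalType)
    (A : UCstarAlg R) (phi : (X -> R[i]) -> A) :=
  [/\ (forall f g, ccontinuous f -> ccontinuous g ->
        phi (fun t => f t + g t) = phi f + phi g) /\
      (forall (k : R[i]) f, ccontinuous f -> phi (fun t => k * f t) = k *: phi f),
      (forall f g, ccontinuous f -> ccontinuous g ->
        phi (fun t => f t * g t) = cs_mul A (phi f) (phi g)),
      phi (fun _ => 1) = cs_one A,
      (forall f, ccontinuous f -> phi (fun t => conjc (f t)) = cs_star A (phi f))
    & (forall f, ccontinuous f -> forall a : A,
        cs_mul A (phi f) a = cs_mul A a (phi f))].

(* The closed ideal C_0(X \ {x}) A: the norm closure of the linear span of   *)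
(* the products phi(f) a with f in C(X), f(x) = 0 (i.e. f in C_0(X\{x})).    *)
Definition fibre_ideal (R : realType) (X : topologicalType)
    (A : UCstarAlg R) (phi : (X -> R[i]) -> A) (x : X) (y : A) : Prop :=
  forall e : R, 0 < e -> exists (n : nat) (fs : 'I_n -> X -> R[i]) (as_ : 'I_n -> A),
    (forall i, ccontinuous (fs i) /\ fs i x = 0) /\
    cs_norm A (y - \sum_(i < n) cs_mul A (phi (fs i)) (as_ i)) < e.

(* Equality in the fibre A_x = A / C_0(X\{x})A of the images of a and b.     *)
Definition fibre_eq (R : realType) (X : topologicalType)
    (A : UCstarAlg R) (phi : (X -> R[i]) -> A) (x : X) (a b : A) : Prop :=
  fibre_ideal phi x (a - b).

(* Proper infiniteness of the unital *-algebra whose elements are represented *)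
(* by elements of A, with equality given by the relation eqr: there are      *)
(* mutually orthogonal projections e, f with e ~ 1 ~ f (Murray-von Neumann:   *)
(* p ~ q iff p = v* v and q = v v* for some v).                              *)
Definition properly_infinite_rel (R : realType) (A : UCstarAlg R)
    (eqr : A -> A -> Prop) : Prop :=
  exists e f v w : A,
    [/\ eqr (cs_star A e) e /\ eqr (cs_mul A e e) e,
        eqr (cs_star A f) f /\ eqr (cs_mul A f f) f,
        eqr (cs_mul A e f) 0,
        eqr (cs_mul A (cs_star A v) v) e /\ eqr (cs_mul A v (cs_star A v)) (cs_one A)
      & eqr (cs_mul A (cs_star A w) w) f /\ eqr (cs_mul A w (cs_star A w)) (cs_one A)].

Definition properly_infinite (R : realType) (A : UCstarAlg R) : Prop :=
  @properly_infinite_rel R A (@eq A).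

Definition fibre_properly_infinite (R : realType) (X : topologicalType)
    (A : UCstarAlg R) (phi : (X -> R[i]) -> A) (x : X) : Prop :=
  @properly_infinite_rel R A (fibre_eq phi x).

(* Main.v *)
Require Import Defs.
From HB Require Import structures.
From mathcomp Require Import all_boot all_order all_algebra.
From mathcomp Require Import all_classical all_reals topology normedtype realfun.
From mathcomp.real_closed Require Import complex.
From mathcomp Require Import ring lra.
Set Implicit Arguments. Unset Strict Implicit. Unset Printing Implicit Defensive.
Import Order.TTheory GRing.Theory Num.Theory.
Import numFieldTopology.Exports numFieldNormedType.Exports.
Local Open Scope ring_scope.
Section Alg.
Variables (R : realType) (A : UCstarAlg R).
Definition AR : Type := cs_car A.
HB.instance Definition _ := GRing.Lmodule.on AR.
HB.instance Definition _ := GRing.Zmodule_isPzRing.Build AR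
  (@cs_mulA R A) (@cs_mul1l R A) (@cs_mul1r R A) (@cs_mulDl R A) (@cs_mulDr R A).
Local Notation T := AR.
Local Notation st := (@cs_star R A : T -> T).
Local Notation nm := (@cs_norm R A : T -> R).

Lemma one_def : cs_one A = (1 : T). Proof. by []. Qed.
Lemma mul_def (a b : T) : cs_mul A a b = a * b. Proof. by []. Qed.
Lemma stD (a b : T) : st (a + b) = st a + st b. Proof. exact: cs_starD. Qed.
Lemma st0 : st 0 = 0.
Proof. by apply: (@addrI _ (st 0)); rewrite -stD !addr0. Qed.
Lemma stN (a : T) : st (- a) = - st a.
Proof. by apply: (@addrI _ (st a)); rewrite -stD !subrr st0. Qed.
Lemma stB (a b : T) : st (a - b) = st a - st b. Proof. by rewrite stD stN. Qed.
Lemma stM (a b : T) : st (a * b) = st b * st a. Proof. exact: cs_starM. Qed.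
Lemma stK (a : T) : st (st a) = a. Proof. exact: cs_starK. Qed.
Lemma st1 : st 1 = 1.
Proof.
have h : st 1 = st 1 * 1 by rewrite mulr1.
by rewrite -[RHS](stK 1) {2}h stM stK mulr1.
Qed.
Lemma stZ (k : R[i]) (a : T) : st (k *: a) = conjc k *: st a. Proof. exact: cs_starZ. Qed.
Lemma scaleAl (k : R[i]) (a b : T) : k *: a * b = k *: (a * b). Proof. exact: cs_scaleAl. Qed.
Lemma scaleAr (k : R[i]) (a b : T) : a * (k *: b) = k *: (a * b). Proof. exact: cs_scaleAr. Qed.

Lemma nm_ge0 (a : T) : 0 <= nm a. Proof. exact: cs_norm_ge0. Qed.
Lemma nm0 : nm 0 = 0.
Proof. by rewrite -(scale0r (0 : T)) cs_normZ Normc.normc0 mul0r. Qed.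
Lemma nm_eq0 (a : T) : nm a = 0 -> a = 0. Proof. exact: cs_norm_eq0. Qed.
Lemma nmD (a b : T) : nm (a + b) <= nm a + nm b. Proof. exact: cs_normD. Qed.
Lemma nmM (a b : T) : nm (a * b) <= nm a * nm b. Proof. exact: cs_normM. Qed.
Lemma nmZ (k : R[i]) (a : T) : nm (k *: a) = Normc.normc k * nm a. Proof. exact: cs_normZ. Qed.
Lemma nmN (a : T) : nm (- a) = nm a.
Proof. by rewrite -scaleN1r nmZ normcN Normc.normc1 mul1r. Qed.
Lemma nmBC (a b : T) : nm (a - b) = nm (b - a). Proof. by rewrite -nmN opprB. Qed.
Lemma nmB (a b : T) : nm (a - b) <= nm a + nm b. Proof. by rewrite -(nmN b) nmD. Qed.
Lemma nm_tri (a b c : T) : nm (a - c) <= nm (a - b) + nm (b - c).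
Proof. by rewrite -[a - c](subrKA b) nmD. Qed.
Lemma nmC (a : T) : nm (st a * a) = nm a ^+ 2. Proof. exact: cs_cstar. Qed.

Lemma nm_st_le (a : T) : nm a <= nm (st a).
Proof.
have [->|a0] := eqVneq (nm a) 0; first exact: nm_ge0.
have pa : 0 < nm a by rewrite lt_def a0 nm_ge0.
have := nmM (st a) a; rewrite nmC expr2 => h.
by rewrite -(ler_pM2r pa).
Qed.
Lemma nm_st (a : T) : nm (st a) = nm a.
Proof. by apply/eqP; rewrite eq_le nm_st_le -{2}(stK a) nm_st_le. Qed.

Lemma nm_proj (p : T) : st p = p -> p * p = p -> nm p <= 1.
Proof.
move=> sp pp; have := nmC p; rewrite sp pp expr2 => h.
have [->|p0] := eqVneq (nm p) 0; first by [].
by move: h => /(congr1 (fun x => x / nm p)); rewrite divff // mulrK ?unitfE // => <-.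
Qed.
Lemma nm1 : nm 1 <= 1. Proof. by apply: nm_proj; rewrite ?st1 ?mulr1. Qed.
Lemma nm_iso (u : T) : st u * u = 1 -> nm u <= 1.
Proof.
move=> h; have := nmC u; rewrite h => e.
have : nm u ^+ 2 <= 1 by rewrite -e nm1.
by rewrite expr_le1 // nm_ge0.
Qed.

Lemma eq_small (a b : T) : (forall e, 0 < e -> nm (a - b) < e) -> a = b.
Proof.
move=> h; apply/eqP; rewrite -subr_eq0; apply/eqP/nm_eq0.
have [//|ne] := eqVneq (nm (a - b)) 0.
have p : 0 < nm (a - b) by rewrite lt_def ne nm_ge0.
by have := h _ p; rewrite ltxx.
Qed.

Lemma comm1B (a b : T) : a * b = b * a -> (1 - a) * b = b * (1 - a).
Proof. by move=> h; rewrite mulrBl mulrBr mul1r mulr1 h. Qed.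
Lemma commBB (a b : T) : a * b = b * a -> (1 - a) * (1 - b) = (1 - b) * (1 - a).
Proof.
by move=> h; rewrite mulrBr mulr1 (comm1B h) mulrBl mul1r.
Qed.

Definition cvgA (u : nat -> T) (l : T) := forall e, 0 < e ->
  exists N, forall n, (N <= n)%N -> nm (u n - l) < e.

End Alg.
Section Fix.
Variables (R : realType) (A : UCstarAlg R).
Local Notation T := (AR A).
Local Notation st := (@cs_star R A : T -> T).
Local Notation nm := (@cs_norm R A : T -> R).

Lemma geo_small (d e : R) : 0 <= d -> 0 < e ->
  exists N : nat, forall n, (N <= n)%N -> d * (2^-1) ^+ n < e.
Proof.
move=> d0 e0; exists (Num.bound (d / e)) => n Nn.
have b := archi_boundP (divr_ge0 d0 (ltW e0)).
have h1 : (n%:R : R) < 2 ^+ n.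
  elim: n {Nn} => [|n IH]; first by rewrite expr0 ltr01.
  rewrite exprS -natr1; have h : (1:R) <= 2 ^+ n by rewrite exprn_ege1 // ler1n.
  lra.
have h2 : d / e < 2 ^+ n.
  apply: (lt_trans b); apply: (le_lt_trans _ h1); by rewrite ler_nat.
rewrite exprVn ltr_pdivrMr ?exprn_gt0 //.
by rewrite ltr_pdivrMr // in h2; rewrite mulrC.
Qed.

Lemma fixpointA (F : T -> T) (rho : R) (P : T -> Prop) :
  P 0 -> 0 <= rho ->
  (forall z, P z -> nm z <= rho -> P (F z) /\ nm (F z) <= rho) ->
  (forall z z', P z -> P z' -> nm z <= rho -> nm z' <= rho ->
     nm (F z - F z') <= 2^-1 * nm (z - z')) ->
  (forall u l, (forall k, P (u k)) -> cvgA u l -> P l) ->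
  exists z, [/\ P z, nm z <= rho & F z = z].
Proof.
move=> P0 rho0 stab lip clos.
pose u k := iter k F 0.
have inv k : P (u k) /\ nm (u k) <= rho.
  elim: k => [|k [Pk nk]]; first by rewrite /u /= nm0.
  exact: stab.
pose d0 := nm (u 1%N - u 0%N).
have d0ge : 0 <= d0 by exact: nm_ge0.
have dk k : nm (u k.+1 - u k) <= d0 * (2^-1) ^+ k.
  elim: k => [|k IH]; first by rewrite expr0 mulr1.
  have [P1 n1] := inv k.+1; have [P2 n2] := inv k.
  apply: (le_trans (lip _ _ P1 P2 n1 n2)).
  by rewrite exprS mulrCA ler_pM2l // invr_gt0 ltr0n.
have cau k j : nm (u (k + j)%N - u k) <= 2 * d0 * ((2^-1) ^+ k - (2^-1) ^+ (k + j)).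
  elim: j => [|j IH]; first by rewrite addn0 subrr nm0 subrr mulr0.
  apply: (le_trans (nm_tri _ (u (k + j)%N) _)).
  rewrite addnS; apply: (le_trans (lerD (dk _) IH)).
  rewrite exprS; set q := (2^-1) ^+ (k + j).
  have -> : 2 * d0 * ((2^-1) ^+ k - 2^-1 * q) = d0 * q + 2 * d0 * ((2^-1) ^+ k - q).
    by field.
  by [].
have cauchy0 e : 0 < e -> exists N : nat, forall m n : nat,
    (N <= m)%N -> (N <= n)%N -> nm (u m - u n) < e.
  move=> e0; have [N HN] := geo_small (mulr_ge0 (ler0n _ 2) d0ge) e0.
  exists N => m n Nm Nn.
  wlog nm_ : m n Nm Nn / (n <= m)%N.
    move=> W; case: (leqP n m) => [|/ltnW] h; first exact: W.
    by rewrite nmBC; apply: W.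
  rewrite -(subnKC nm_); apply: (le_lt_trans (cau _ _)).
  apply: le_lt_trans (HN _ Nn); apply: ler_wpM2l; first by rewrite mulr_ge0.
  idtac.
  have : 0 <= (2^-1 : R) ^+ (n + (m - n)) by rewrite exprn_ge0 // invr_ge0 ler0n.
  lra.
have [l Hl] := cs_complete cauchy0.
have cv : cvgA u l by exact: Hl.
have Pl : P l by apply: (clos u) => // k; have [] := inv k.
have nl : nm l <= rho.
  apply/ler_addgt0Pr => e e0; have [N HN] := cv e e0.
  have [_ nN] := inv N.
  rewrite -[l](subrK (u N)); apply: (le_trans (nmD _ _)).
  by rewrite addrC lerD // nmBC ltW // HN.
exists l; split => //; apply: eq_small => e e0.
have e4 : 0 < e / 4 by rewrite divr_gt0.
have [N HN] := cv _ e4.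
have [PN nN] := inv N.
apply: (le_lt_trans (nm_tri _ (F (u N)) _)).
have h1 := lip _ _ Pl PN nl nN.
have h2 : nm (F (u N) - l) < e / 4 by exact: (HN N.+1).
have h3 : nm (l - u N) < e / 4 by rewrite nmBC; exact: HN.
have h4 : 0 <= nm (l - u N) := nm_ge0 _.
lra.
Qed.
End Fix.
Section Local.
Variables (R : realType) (A : UCstarAlg R).
Local Notation T := (AR A).
Local Notation st := (@cs_star R A : T -> T).
Local Notation nm := (@cs_norm R A : T -> R).

Lemma cvg_st (u : nat -> T) l : cvgA u l -> (forall k, st (u k) = u k) -> st l = l.
Proof.
move=> cv h; apply: eq_small => e e0.
have e2 : 0 < e / 2 by rewrite divr_gt0.
have [N HN] := cv _ e2.
apply: (le_lt_trans (nm_tri _ (u N) _)).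
have h1 : nm (st l - u N) < e / 2 by rewrite -(h N) -stB nm_st nmBC HN.
have h2 : nm (u N - l) < e / 2 by rewrite HN.
lra.
Qed.

Lemma cvg_comm (u : nat -> T) l c : cvgA u l -> (forall k, c * u k = u k * c) ->
  c * l = l * c.
Proof.
move=> cv h; apply: eq_small => e e0.
have e2 : 0 < e / (2 * nm c + 1).
  by rewrite divr_gt0 // ltr_wpDl // mulr_ge0 // nm_ge0.
have [N HN] := cv _ e2.
have HN' := HN N (leqnn N).
have -> : c * l - l * c = c * (l - u N) - (l - u N) * c.
  by rewrite mulrBr mulrBl h opprB addrA subrK.
apply: (le_lt_trans (nmB _ _)).
apply: (le_lt_trans (lerD (nmM _ _) (nmM _ _))).
rewrite nmBC; set a := nm (u N - l).
have a0 : 0 <= a := nm_ge0 _.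
have c0 : 0 <= nm c := nm_ge0 _.
have : a * (2 * nm c + 1) < e by rewrite -ltr_pdivlMr // ltr_wpDl // mulr_ge0.
nra.
Qed.

Lemma normc_real (a : R) : 0 <= a -> Normc.normc (real_complex R a) = a.
Proof. by move=> a0; rewrite /Normc.normc /= expr0n addr0 sqrtr_sqr ger0_norm. Qed.

Lemma inv_sqrt (y : T) : st y = y -> nm y <= 8^-1 ->
  exists r : T, [/\ st r = r, r * y = y * r, r * (1 - y) * r = 1 & nm r <= 3/2].
Proof.
move=> sy ny.
have ny0 : 0 <= nm y := nm_ge0 y.
pose P1 (w : T) := st w = w /\ y * w = w * y.
have [w [[sw yw] nw ew]] : exists w, [/\ P1 w, nm w <= 2 & 1 + y * w = w].
  apply: (@fixpointA R A (fun w => 1 + y * w) 2 P1).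
  - by split; rewrite ?st0 ?mulr0 ?mul0r.
  - by [].
  - move=> z [sz yz] nz; split; first split.
    + by rewrite stD st1 stM sz sy yz.
    + by rewrite mulrDr mulrDl mulr1 mul1r mulrA -[y * z * y]mulrA -yz mulrA.
    + apply: (le_trans (nmD _ _)); apply: (le_trans (lerD (nm1 A) (nmM _ _))).
      have : nm y * nm z <= 8^-1 * 2 by apply: ler_pM => //; exact: nm_ge0.
      lra.
  - move=> z z' _ _ _ _; rewrite opprD addrACA subrr add0r -mulrBr.
    apply: (le_trans (nmM _ _)); apply: ler_wpM2r; first exact: nm_ge0.
    apply: (le_trans ny); lra.
  - move=> u l Pu cv; split; first by apply: (cvg_st cv) => k; case: (Pu k).
    by apply: (cvg_comm cv) => k; case: (Pu k).
pose h : R[i] := real_complex R (2^-1).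
have nh : Normc.normc h = 2^-1 by rewrite normc_real // invr_ge0 ler0n.
have ch : conjc h = h by rewrite conjc_real.
have nyw : nm (1 - w) <= 4^-1.
  have -> : 1 - w = - (y * w) by rewrite -{1}ew opprD addrA subrr add0r.
  rewrite nmN; apply: (le_trans (nmM _ _)).
  have : nm y * nm w <= 8^-1 * 2 by apply: ler_pM => //; exact: nm_ge0.
  lra.
pose P2 (z : T) := [/\ st z = z, y * z = z * y & w * z = z * w].
have wy : w * y = y * w by rewrite yw.
have [z [[sz yz wz] nz ez]] :
    exists z, [/\ P2 z, nm z <= 2^-1 & h *: ((1 - w) + z * z) = z].
  apply: (@fixpointA R A (fun z => h *: ((1 - w) + z * z)) (2^-1) P2).
  - by split; rewrite ?st0 ?mulr0 ?mul0r.
  - by rewrite invr_ge0 ler0n.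
  - move=> z [sz yz wz] nz; split; first split.
    + by rewrite stZ ch stD stB st1 sw stM sz.
    + rewrite scaleAr scaleAl; congr (_ *: _).
      rewrite !mulrDr !mulrDl !mulrN !mulNr mulr1 mul1r -wy.
      by rewrite mulrA yz -mulrA yz mulrA.
    + rewrite scaleAr scaleAl; congr (_ *: _).
      rewrite !mulrDr !mulrDl !mulrN !mulNr mulr1 mul1r.
      by rewrite mulrA wz -mulrA wz mulrA.
    + rewrite nmZ nh; apply: (le_trans (ler_wpM2l _ (nmD _ _))).
        by rewrite invr_ge0 ler0n.
      have : nm (z * z) <= 2^-1 * 2^-1.
        apply: (le_trans (nmM _ _)); apply: ler_pM => //; exact: nm_ge0.
      lra.
  - move=> z z' _ _ nz nz'.
    rewrite -scalerBr nmZ nh opprD addrACA subrr add0r.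
    have -> : z * z - z' * z' = z * (z - z') + (z - z') * z'.
      by rewrite mulrBr mulrBl addrA subrK.
    have n0 : 0 <= nm (z - z') := nm_ge0 _.
    have h1 : nm (z * (z - z')) <= 2^-1 * nm (z - z').
      apply: (le_trans (nmM _ _)); apply: ler_wpM2r => //.
    have h2 : nm ((z - z') * z') <= 2^-1 * nm (z - z').
      apply: (le_trans (nmM _ _)); rewrite mulrC; apply: ler_wpM2r => //.
    have h3 := nmD (z * (z - z')) ((z - z') * z').
    have : 0 <= (2^-1 : R) by rewrite invr_ge0 ler0n.
    nra.
  - move=> u l Pu cv; split.
    + by apply: (cvg_st cv) => k; case: (Pu k).
    + by apply: (cvg_comm cv) => k; case: (Pu k).
    + by apply: (cvg_comm cv) => k; case: (Pu k).
have e2 : z + z = (1 - w) + z * z.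
  have hR : (2^-1 : R) + 2^-1 = 1 by field.
  have hh : h + h = 1 by rewrite /h -rmorphD hR rmorph1.
  by rewrite -{1 2}ez -scalerDl hh scale1r.
exists (1 - z); split.
- by rewrite stB st1 sz.
- by apply: comm1B; rewrite yz.
- have -> : (1 - z) * (1 - y) * (1 - z) = (1 - z) * (1 - z) * (1 - y).
    rewrite -!mulrA; congr (_ * _).
    by apply: commBB; rewrite yz.
  have -> : (1 - z) * (1 - z) = w.
    have e3 : w = 1 + z * z - (z + z).
      by apply/eqP; rewrite eq_sym subr_eq e2 addrA subrKC.
    rewrite e3 mulrBr mulr1 mulrBl mul1r !opprD !opprK !addrA.
    by rewrite [1 + z * z - z]addrAC [1 - z + z * z - z]addrAC.
  by rewrite mulrBr mulr1 wy -[X in X - _]ew addrK.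
- apply: (le_trans (nmB _ _)); have := nm1 A; lra.
Qed.
End Local.
Section Good.
Variables (R : realType) (A : UCstarAlg R).
Local Notation T := (AR A).
Local Notation st := (@cs_star R A : T -> T).
Local Notation nm := (@cs_norm R A : T -> R).

Definition goodp (p : T) := exists S1 S2 : T,
  [/\ p * (st S1 * S1) = p, p * (st S2 * S2) = p & p * (st S1 * S2) = 0].

Variables (p : T) (sp : st p = p) (pp : p * p = p) (pc : forall a, p * a = a * p).

Lemma local_iso (t : T) : nm (p * (st t * t) - p) <= 8^-1 ->
  exists r, [/\ p * (st (t * r) * (t * r)) = p, st r = r & nm r <= 3/2].
Proof.
move=> nt.
pose y := p - p * (st t * t).
have sy : st y = y.
  by rewrite /y stB sp stM stM stK sp -pc.
have ny : nm y <= 8^-1 by rewrite /y nmBC.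
have [r [sr ry rer nr]] := inv_sqrt sy ny.
have py : p * y = y.
  by rewrite /y mulrBr [p * p]pp [p * (p * _)]mulrA [p * p]pp.
have e : p * (st t * t) = p * (1 - y) by rewrite mulrBr mulr1 py /y opprB subrKC.
exists r; split => //.
have -> : p * (st (t * r) * (t * r)) = r * (p * (st t * t)) * r.
  by rewrite stM sr !mulrA (pc r).
rewrite e.
have -> : r * (p * (1 - y)) * r = p * (r * (1 - y) * r) by rewrite !mulrA (pc r).
by rewrite rer mulr1.
Qed.

Lemma pst (x : T) : p * (st x * x) = st (p * x) * (p * x).
Proof.
by rewrite stM sp -[st x * p * (p * x)]mulrA [p * (p * x)]mulrA [p * p]pp [st x * (p * x)]mulrA -(pc (st x)) mulrA.
Qed.

Lemma local_good (t1 t2 : T) :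
  nm (p * (st t1 * t1) - p) <= 32^-1 -> nm (p * (st t2 * t2) - p) <= 32^-1 ->
  nm (p * (st t1 * t2)) <= 32^-1 -> goodp p.
Proof.
move=> h1 h2 h3.
have [r1 [e1 sr1 nr1]] : exists r, [/\ p * (st (t1 * r) * (t1 * r)) = p, st r = r & nm r <= 3/2].
  by apply: local_iso; apply: (le_trans h1); lra.
set S1 := t1 * r1 in e1.
pose x := st S1 * t2.
pose t2' := t2 - S1 * x.
have sx : st x = st t2 * S1 by rewrite /x stM stK.
have o : p * (st S1 * t2') = 0.
  rewrite /t2' mulrBr [st S1 * (S1 * x)]mulrA mulrBr [p * (st S1 * S1 * x)]mulrA e1.
  by rewrite subrr.
have E : st t2' * t2' = st t2 * t2 - st x * x - (st x * x - st x * ((st S1 * S1) * x)).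
  rewrite /t2' stB stM sx mulrBl !mulrBr.
  rewrite [st t2 * (S1 * x)]mulrA -sx -[st x * st S1 * t2]mulrA.
  by rewrite -[st x * st S1 * (S1 * x)]mulrA [st S1 * (S1 * x)]mulrA.
have pc3 : p * (st x * ((st S1 * S1) * x)) = p * (st x * x).
  rewrite [p * _]mulrA (pc (st x)) -mulrA [p * (_ * x)]mulrA e1.
  by rewrite mulrA -(pc (st x)) mulrA.
have E2 : p * (st t2' * t2') - p = (p * (st t2 * t2) - p) - p * (st x * x).
  rewrite E !mulrBr pc3 subrr subr0.
  by rewrite addrAC.
have px : p * x = r1 * (p * (st t1 * t2)).
  by rewrite /x /S1 stM sr1 !mulrA (pc r1).
have npx : nm (p * x) <= 3/2 * 32^-1.
  rewrite px; apply: (le_trans (nmM _ _)); apply: ler_pM => //; exact: nm_ge0.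
have ht2 : nm (p * (st t2' * t2') - p) <= 8^-1.
  rewrite E2; apply: (le_trans (nmB _ _)).
  have hc : nm (p * (st x * x)) = nm (p * x) ^+ 2 by rewrite pst; exact: nmC.
  rewrite hc.
  have n0 : 0 <= nm (p * x) := nm_ge0 _.
  have hy : nm (p * x) ^+ 2 <= 9/4096 by rewrite expr2; nra.
  apply: le_trans; first (apply: lerD; [exact: h2 | exact: hy]).
  lra.
have [r2 [e2 sr2 nr2]] := local_iso ht2.
exists S1, (t2' * r2); split => //.
by rewrite mulrA mulrA -[p * st S1 * t2']mulrA o mul0r.
Qed.
End Good.
Section CC.
Variables (R : realType) (X : topologicalType).
Implicit Types f g : X -> R[i].

Lemma ReD (a b : R[i]) : complex.Re (a + b) = complex.Re a + complex.Re b. Proof. by case: a; case: b. Qed.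
Lemma ImD (a b : R[i]) : complex.Im (a + b) = complex.Im a + complex.Im b. Proof. by case: a; case: b. Qed.
Lemma ReM (a b : R[i]) : complex.Re (a * b) = complex.Re a * complex.Re b - complex.Im a * complex.Im b.
Proof. by case: a => ? ?; case: b. Qed.
Lemma ImM (a b : R[i]) : complex.Im (a * b) = complex.Re a * complex.Im b + complex.Im a * complex.Re b.
Proof. by case: a => ? ?; case: b. Qed.
Lemma ReJ (a : R[i]) : complex.Re (conjc a) = complex.Re a. Proof. by case: a. Qed.
Lemma ImJ (a : R[i]) : complex.Im (conjc a) = - complex.Im a. Proof. by case: a. Qed.
Lemma Rer (x : R) : complex.Re (real_complex R x) = x. Proof. by []. Qed.
Lemma Imr (x : R) : complex.Im (real_complex R x) = 0. Proof. by []. Qed.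

Lemma ccontD f g : ccontinuous f -> ccontinuous g -> ccontinuous (fun t => f t + g t).
Proof.
move=> [f1 f2] [g1 g2]; split.
- have -> : (fun t => complex.Re (f t + g t)) = (fun t => complex.Re (f t) + complex.Re (g t)).
    by apply: funext => t; rewrite ReD.
  by move=> x; exact: (continuousD (f1 x) (g1 x)).
- have -> : (fun t => complex.Im (f t + g t)) = (fun t => complex.Im (f t) + complex.Im (g t)).
    by apply: funext => t; rewrite ImD.
  by move=> x; exact: (continuousD (f2 x) (g2 x)).
Qed.

Lemma ccontM f g : ccontinuous f -> ccontinuous g -> ccontinuous (fun t => f t * g t).
Proof.
move=> [f1 f2] [g1 g2]; split.
- have -> : (fun t => complex.Re (f t * g t)) = (fun t => complex.Re (f t) * complex.Re (g t) - complex.Im (f t) * complex.Im (g t)).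
    by apply: funext => t; rewrite ReM.
  by move=> x; exact: (continuousB (continuousM (f1 x) (g1 x)) (continuousM (f2 x) (g2 x))).
- have -> : (fun t => complex.Im (f t * g t)) = (fun t => complex.Re (f t) * complex.Im (g t) + complex.Im (f t) * complex.Re (g t)).
    by apply: funext => t; rewrite ImM.
  by move=> x; exact: (continuousD (continuousM (f1 x) (g2 x)) (continuousM (f2 x) (g1 x))).
Qed.

Lemma ccontJ f : ccontinuous f -> ccontinuous (fun t => conjc (f t)).
Proof.
move=> [f1 f2]; split.
- have -> : (fun t => complex.Re (conjc (f t))) = (fun t => complex.Re (f t)).
    by apply: funext => t; rewrite ReJ.
  by [].
- have -> : (fun t => complex.Im (conjc (f t))) = (fun t => - complex.Im (f t)).
    by apply: funext => t; rewrite ImJ.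
  by move=> x; exact: (continuousN (f2 x)).
Qed.

Lemma ccont_cst (k : R[i]) : ccontinuous (fun _ : X => k).
Proof. by split => x; apply: cvg_cst. Qed.

Lemma ccont_real (q : X -> R) : continuous q -> ccontinuous (fun t => real_complex R (q t)).
Proof. by move=> hq; split => //= x; apply: cvg_cst. Qed.

Lemma ccontZ (k : R[i]) f : ccontinuous f -> ccontinuous (fun t => k * f t).
Proof. by move=> hf; apply: ccontM => //; apply: ccont_cst. Qed.

Definition chiR (U : set X) (t : X) : R := if `[< U t >] then 1 else 0.
Definition chi (U : set X) (t : X) : R[i] := real_complex R (chiR U t).

Lemma chiR_cont (U : set X) : clopen U -> continuous (chiR U).
Proof.
move=> [oU cU] x; apply: (near_cst_continuous (chiR U x)).
case: (pselect (U x)) => Ux.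
- have : nbhs x U by apply: open_nbhs_nbhs.
  apply: filterS => t Ut; by rewrite /chiR (asboolT Ut) ?(asboolT Ux).
- have : nbhs x (setC U) by apply: open_nbhs_nbhs; split => //; exact: closed_openC.
  apply: filterS => t Ut; by rewrite /chiR (asboolF Ut) ?(asboolF Ux).
Qed.

Lemma ccont_chi (U : set X) : clopen U -> ccontinuous (chi U).
Proof. by move=> cU; apply: ccont_real; apply: chiR_cont. Qed.
End CC.
Arguments chi {R X}.
Arguments chiR {R X}.
Arguments ccont_chi {R X}.
Arguments chiR_cont {R X}.
Arguments ccont_cst {R X}.
Section Phi.
Variables (R : realType) (X : topologicalType) (A : UCstarAlg R) (phi : (X -> R[i]) -> A).
Hypothesis hphi : is_CX_structure phi.
Local Notation T := (AR A).
Local Notation st := (@cs_star R A : T -> T).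
Local Notation nm := (@cs_norm R A : T -> R).
Local Notation ph f := (phi f : T).

Lemma phiD f g : ccontinuous f -> ccontinuous g -> ph (fun t => f t + g t) = ph f + ph g.
Proof. by move=> cf cg; case: hphi => [[h _] _ _ _ _]; exact: (h f g cf cg). Qed.
Lemma phiZ k f : ccontinuous f -> ph (fun t => k * f t) = k *: ph f.
Proof. by move=> cf; case: hphi => [[_ h] _ _ _ _]; exact: (h k f cf). Qed.
Lemma phiM f g : ccontinuous f -> ccontinuous g -> ph (fun t => f t * g t) = ph f * ph g.
Proof. by move=> cf cg; case: hphi => [_ h _ _ _]; exact: (h f g cf cg). Qed.
Lemma phi1 : ph (fun _ => 1) = 1.
Proof. by case: hphi. Qed.
Lemma phiJ f : ccontinuous f -> ph (fun t => conjc (f t)) = st (ph f).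
Proof. by move=> cf; case: hphi => [_ _ _ h _]; exact: (h f cf). Qed.
Lemma phiC f (a : T) : ccontinuous f -> ph f * a = a * ph f.
Proof. by move=> cf; case: hphi => [_ _ _ _ h]; exact: (h f cf a). Qed.
Lemma phi0 : ph (fun _ => 0) = 0.
Proof.
have h := phiD (@ccont_cst R X (0 : R[i])) (@ccont_cst R X 0).
have e : (fun _ : X => (0 : R[i]) + 0) = (fun _ => 0) by apply: funext => t; rewrite addr0.
rewrite e in h.
by apply: (@addrI _ (ph (fun _ => 0))); rewrite addr0; symmetry; exact: h.
Qed.

Lemma phi_ext f g : (forall t, f t = g t) -> ph f = ph g.
Proof. by move=> h; congr (phi _); apply: funext. Qed.

Lemma phi_real_le1 (q : X -> R) : continuous q -> (forall t, `|q t| <= 1) ->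
  nm (ph (fun t => real_complex R (q t))) <= 1.
Proof.
move=> hq q1.
pose s t := Num.sqrt (1 - q t * q t).
have cs : continuous s.
  move=> x; have h1 : {for x, continuous (fun t => 1 - q t * q t)}.
    exact: (continuousB (cvg_cst (1 : R)) (continuousM (hq x) (hq x))).
  exact: (continuous_comp h1 (@sqrt_continuous R _)).
pose g t : R[i] := Complex (q t) (s t).
have cg : ccontinuous g by split.
have cgJ := ccontJ cg.
have qq t : q t * q t <= 1.
  have := q1 t; rewrite ler_norml => /andP[h1 h2]; nra.
have e1 : forall t, conjc (g t) * g t = 1.
  move=> t; apply/eqP; rewrite eq_complex /=.
  have ss : s t * s t = 1 - q t * q t.
    by rewrite /s -expr2 sqr_sqrtr // subr_ge0 qq.
  apply/andP; split; apply/eqP; last by ring.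
  by rewrite mulNr opprK ss addrC subrK.
have iso : st (ph g) * ph g = 1.
  by rewrite -phiJ // -phiM // (phi_ext e1) phi1.
have nu := nm_iso iso.
have e2 : forall t, g t + conjc (g t) = real_complex R 2 * real_complex R (q t).
  move=> t; apply/eqP; rewrite eq_complex /=.
  apply/andP; split; apply/eqP; ring.
have hs : ph g + st (ph g) = real_complex R 2 *: ph (fun t => real_complex R (q t)).
  by rewrite -phiJ // -phiD // (phi_ext e2) phiZ //; apply: ccont_real.
have := nmB (ph g) (- st (ph g)); rewrite opprK hs nmZ normc_real ?ler0n //.
rewrite nmN nm_st => h.
have := nm_ge0 (ph (fun t => real_complex R (q t))).
lra.
Qed.

Lemma phi_bound (h : X -> R[i]) (M : R) : ccontinuous h -> 0 < M ->
  (forall t, `|complex.Re (h t)| <= M /\ `|complex.Im (h t)| <= M) -> nm (ph h) <= 2 * M.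
Proof.
move=> [h1 h2] M0 hb.
pose q1 t := complex.Re (h t) * M^-1.
pose q2 t := complex.Im (h t) * M^-1.
have c1 : continuous q1 by move=> x; exact: (continuousM (h1 x) (cvg_cst _)).
have c2 : continuous q2 by move=> x; exact: (continuousM (h2 x) (cvg_cst _)).
have Mi : 0 < M^-1 by rewrite invr_gt0.
have b1 t : `|q1 t| <= 1.
  by rewrite /q1 normrM (gtr0_norm Mi) ler_pdivrMr // mul1r; case: (hb t).
have b2 t : `|q2 t| <= 1.
  by rewrite /q2 normrM (gtr0_norm Mi) ler_pdivrMr // mul1r; case: (hb t).
have M0' : M != 0 by rewrite gt_eqF.
have e t : h t = real_complex R M *
    (real_complex R (q1 t) + Complex 0 1 * real_complex R (q2 t)).
  rewrite /q1 /q2; case: (h t) => a b /=; apply/eqP; rewrite eq_complex /=.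
  by apply/andP; split; apply/eqP; field.
have cr1 := ccont_real c1; have cr2 := ccont_real c2.
rewrite (phi_ext e) phiZ; last first.
  by apply: ccontD => //; apply: ccontZ.
rewrite phiD //; last by apply: ccontZ.
rewrite phiZ // nmZ normc_real; last exact: ltW.
have n1 := phi_real_le1 c1 b1.
have n2 := phi_real_le1 c2 b2.
have ni : Normc.normc (Complex 0 1 : R[i]) = 1.
  by rewrite /Normc.normc expr0n expr1n add0r sqrtr1.
have : nm (ph (fun t => real_complex R (q1 t)) +
   Complex 0 1 *: ph (fun t => real_complex R (q2 t))) <= 2.
  apply: (le_trans (nmD _ _)); rewrite nmZ ni mul1r; lra.
move=> hh; rewrite mulrC; apply: ler_wpM2r => //; exact: ltW.
Qed.

Definition pr (U : set X) : T := phi (chi U).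

Lemma chi_real (U : set X) t : chi U t = real_complex R (chiR U t). Proof. by []. Qed.

Lemma pr_st U : clopen U -> st (pr U) = pr U.
Proof.
move=> cU; rewrite /pr -phiJ; last exact: ccont_chi.
by apply: phi_ext => t; rewrite /chi conjc_real.
Qed.

Lemma pr_idem U : clopen U -> pr U * pr U = pr U.
Proof.
move=> cU; rewrite /pr -phiM; try exact: ccont_chi.
apply: phi_ext => t; rewrite /chi -rmorphM /chiR.
by case: asboolP => _; rewrite ?mulr1 ?mulr0.
Qed.

Lemma pr_central U (a : T) : clopen U -> pr U * a = a * pr U.
Proof. by move=> cU; apply: phiC; exact: ccont_chi. Qed.

Lemma pr_T : pr setT = 1.
Proof.
rewrite /pr -phi1; apply: phi_ext => t.
by rewrite /chi /chiR asboolT // rmorph1.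
Qed.

Lemma pr_sub W V : clopen W -> clopen V -> subset W V -> pr W * pr V = pr W.
Proof.
move=> cW cV WV; rewrite /pr -phiM; try exact: ccont_chi.
apply: phi_ext => t; rewrite /chi -rmorphM /chiR.
case: (asboolP (W t)) => Wt; last by rewrite mul0r.
by rewrite asboolT ?mulr1 //; apply: WV.
Qed.

Lemma pr_disj U V : clopen U -> clopen V -> setI U V = set0 -> pr U * pr V = 0.
Proof.
move=> cU cV UV; rewrite /pr -phiM; try exact: ccont_chi.
rewrite -phi0; apply: phi_ext => t; rewrite /chi -rmorphM /chiR.
case: (asboolP (U t)) => Ut; last by rewrite mul0r rmorph0.
case: (asboolP (V t)) => Vt; last by rewrite mulr0 rmorph0.
have : setI U V t by split.
by rewrite UV.
Qed.

Lemma pr_union U V : clopen U -> clopen V -> setI U V = set0 ->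
  pr (setU U V) = pr U + pr V.
Proof.
move=> cU cV UV; rewrite /pr -phiD; try exact: ccont_chi.
apply: phi_ext => t; rewrite /chi -rmorphD /chiR.
case: (asboolP (U t)) => Ut.
  case: (asboolP (V t)) => Vt.
    have : setI U V t by split.
    by rewrite UV.
  by rewrite asboolT ?addr0 //; left.
case: (asboolP (V t)) => Vt.
  by rewrite asboolT ?add0r //; right.
by rewrite asboolF ?addr0 // => -[].
Qed.

End Phi.
Section Topo.
Local Open Scope classical_set_scope.
Variable T : topologicalType.

Lemma directed_cover (K : set T) (G : set (set T)) :
  compact K -> G set0 -> (forall U V, G U -> G V -> G (U `|` V)) ->
  (forall U, G U -> open U) ->
  (forall y, K y -> exists2 U, G U & U y) -> exists2 U, G U & K `<=` U.
Proof.
move=> cK G0 GU Gop Gcov.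
pose F := filter_from G (fun U => [set V | G V /\ U `<=` V]).
have FF : Filter F.
  apply: filter_from_filter; first by exists set0.
  move=> U V GUU GVV; exists (U `|` V); first exact: GU.
  by move=> W [GW UVW]; split; split => //; apply: subset_trans UVW => z ?; [left|right].
have /(iffLR (compact_near_coveringP _)) := cK.
move=> /(_ _ F (fun V x' => V x') FF) [].
  move=> y Ky; have [U GUU Uy] := Gcov y Ky.
  exists (U, [set V | G V /\ U `<=` V]); first split.
  - by apply: open_nbhs_nbhs; split => //; exact: Gop.
  - by exists U.
  - by case=> x' V /= [Ux' [_ UV]]; apply: UV.
move=> M GM KM.
by exists M => //; apply: KM; split.
Qed.

Hypotheses (hX : hausdorff_space T) (cT : compact [set: T]).

Lemma sep_closed (P0 P1 : set T) : closed P0 -> closed P1 -> P0 `&` P1 = set0 ->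
  exists U V, [/\ open U, open V, P0 `<=` U, P1 `<=` V & U `&` V = set0].
Proof.
move=> c0 c1 d01.
have cK : compact P0 by apply: (subclosed_compact c0 cT).
pose G := [set U : set T | open U /\ closure U `&` P1 = set0].
have [U [oU cU] P0U] : exists2 U, G U & P0 `<=` U.
  apply: directed_cover => //.
  - by split; [exact: open0 | rewrite closure0 set0I].
  - move=> U V [oU cU] [oV cV]; split; first exact: openU.
    by rewrite closureU setIUl cU cV setU0.
  - by move=> U [].
  - move=> y P0y.
    have reg : {for y, regular_space T}.
      by apply: (@compact_regular T y setT hX cT); apply: filterT.
    have nP1 : nbhs y (~` P1).
      apply: open_nbhs_nbhs; split; first exact: closed_openC.
      by move=> P1y; suff : (P0 `&` P1) y by rewrite d01.
    have [W nW cW] := reg _ nP1.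
    exists W°; last exact: nbhs_singleton (nbhs_interior nW).
    split; first exact: open_interior.
    apply/seteqP; split => // z [cz P1z].
    have : closure W z by apply: (closureS (@interior_subset _ W)).
    by move/cW.
exists U, (~` closure U); split => //.
- exact/closed_openC/closed_closure.
- by move=> z P1z cz; suff : (closure U `&` P1) z by rewrite cU.
- apply/seteqP; split => // z [Uz nz]; apply: nz; exact: subset_closure.
Qed.

Lemma zero_dim : totally_disconnected [set: T] -> zero_dimensional T.
Proof.
move=> tdX x y xy; apply: contrapT => nC.
pose Q := \bigcap_(C in [set C : set T | clopen C /\ C x]) C.
have Qx : Q x by move=> C [].
have Qy : Q y.
  by move=> C [cC Cx]; apply: contrapT => nCy; apply: nC; exists C; split.
have cQ : closed Q by apply: closed_bigI => C0 [[_ ?] _].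
have QC (C0 : set T) : clopen C0 -> C0 x -> Q `<=` C0 by move=> cC Cx z; apply.
have key : forall P0 P1 : set T, closed P0 -> closed P1 -> P0 `&` P1 = set0 ->
    (forall z, Q z -> P0 z \/ P1 z) -> P0 x -> P1 `<=` Q -> P1 = set0.
  move=> P0 P1 c0 c1 d01 cov P0x P1Q.
  have [U [V [oU oV P0U P1V dUV]]] := sep_closed c0 c1 d01.
  pose G := [set S : set T | exists C, [/\ clopen C, C x & S = ~` C]].
  have cK : closed (~` (U `|` V)) by apply: open_closedC; apply: openU.
  have [S [C [cC Cx ->]] KS] : exists2 S, G S & ~` (U `|` V) `<=` S.
    apply: directed_cover.
    - exact: (subclosed_compact cK cT).
    - by exists setT; split; [exact: clopenT | | rewrite setCT].
    - move=> _ _ [C1 [cC1 C1x ->]] [C2 [cC2 C2x ->]].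
      by exists (C1 `&` C2); split; [exact: clopenI | | rewrite setCI].
    - by move=> _ [C [[_ cC] _ ->]]; exact: closed_openC.
    - move=> y0 Ky0.
      have nQ : ~ Q y0.
        move=> /cov [/P0U|/P1V] h; apply: Ky0; by [left|right].
      have [C [[cC Cx] nCy]] : exists C, (clopen C /\ C x) /\ ~ C y0.
        apply: contrapT => h; apply: nQ => C hC; apply: contrapT => nCy.
        by apply: h; exists C.
      by exists (~` C) => //; exists C.
  have CUV : C `<=` U `|` V.
    move=> z Cz; apply: contrapT => nz; have := KS z nz; by [].
  have cD : clopen (C `&` U).
    split; first by apply: openI => //; case: cC.
    have -> : C `&` U = C `&` ~` V.
      apply/seteqP; split => z [Cz h]; split => //.
      + by move=> Vz; suff : (U `&` V) z by rewrite dUV.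
      + by case: (CUV z Cz).
    by apply: closedI; [case: cC | exact: open_closedC].
  have Dx : (C `&` U) x by split => //; apply: P0U.
  apply/seteqP; split => // z P1z.
  have [_ Uz] := QC _ cD Dx z (P1Q z P1z).
  have : (U `&` V) z by split => //; apply: P1V.
  by rewrite dUV.
have conQ : connected Q.
  move=> B [b Bb] [O oO BO] [F cF BF].
  have BQ : B `<=` Q by rewrite BO => z [].
  apply: contrapT => nBQ.
  have [z [Qz nBz]] : exists z, Q z /\ ~ B z.
    apply: contrapT => h; apply: nBQ; apply/seteqP; split => // z Qz.
    by apply: contrapT => nBz; apply: h; exists z.
  pose B' := Q `&` ~` O.
  have cB' : closed B' by apply: closedI => //; exact: open_closedC.
  have cB : closed B by rewrite BF; apply: closedI.
  have dBB : B `&` B' = set0.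
    apply/seteqP; split => // w [Bw [_ nOw]].
    by move: Bw; rewrite BO => -[].
  have cov z0 : Q z0 -> B z0 \/ B' z0.
    move=> Qz0; case: (pselect (O z0)) => Oz0; last by right.
    by left; rewrite BO.
  have B'z : B' z by split => // Oz; apply: nBz; rewrite BO.
  case: (pselect (B x)) => Bx.
  - have := key B B' cB cB' dBB cov Bx (fun w => @proj1 _ _).
    by move=> h; move: B'z; rewrite h.
  - have B'x : B' x by case: (cov x Qx).
    have dBB' : B' `&` B = set0 by rewrite setIC.
    have := key B' B cB' cB dBB' _ B'x BQ.
    have h2 : forall z0, Q z0 -> B' z0 \/ B z0 by move=> z0 /cov [] ?; [right|left].
    by move=> /(_ h2) h; move: Bb; rewrite h.
have : connected_component [set: T] x y.
  by exists Q => //; split.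
rewrite tdX // => yx.
by move: xy; rewrite yx eqxx.
Qed.

Lemma clopen_nbhd : totally_disconnected [set: T] ->
  forall x (W : set T), nbhs x W -> exists C, [/\ clopen C, C x & C `<=` W].
Proof.
move=> tdX x W nW.
have zd := zero_dim tdX.
have Wx : W° x := nbhs_singleton (nbhs_interior nW).
pose G := [set S : set T | exists C, [/\ clopen C, C x & S = ~` C]].
have cK : closed (~` W°) by apply: open_closedC; exact: open_interior.
have [S [C [cC Cx ->]] KS] : exists2 S, G S & ~` W° `<=` S.
  apply: directed_cover.
  - exact: (subclosed_compact cK cT).
  - by exists setT; split; [exact: clopenT | | rewrite setCT].
  - move=> _ _ [C1 [cC1 C1x ->]] [C2 [cC2 C2x ->]].
    by exists (C1 `&` C2); split; [exact: clopenI | | rewrite setCI].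
  - by move=> _ [C [[_ cC] _ ->]]; exact: closed_openC.
  - move=> y0 Ky0.
    have xy : x != y0 by apply/eqP => e; apply: Ky0; rewrite -e.
    have [C [cC Cx nCy]] := zd x y0 xy.
    by exists (~` C) => //; exists C.
exists C; split => // z Cz; apply: (@interior_subset _ W).
by apply: contrapT => nz; have := KS z nz.
Qed.
End Topo.
Section LocalSmall.
Local Open Scope classical_set_scope.
Variables (R : realType) (X : topologicalType) (A : UCstarAlg R) (phi : (X -> R[i]) -> A).
Hypothesis hphi : is_CX_structure phi.
Local Notation T := (AR A).
Local Notation st := (@cs_star R A : T -> T).
Local Notation nm := (@cs_norm R A : T -> R).
Local Notation p U := (pr phi U).

Lemma nm_pr U : clopen U -> nm (p U) <= 1.
Proof. by move=> cU; apply: nm_proj; [exact: pr_st | exact: pr_idem]. Qed.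

Variable x : X.
Definition LS (r : T) := forall e, 0 < e ->
  exists2 W, nbhs x W & forall U, clopen U -> U `<=` W -> nm (p U * r) < e.

Lemma LS_add a b : LS a -> LS b -> LS (a + b).
Proof.
move=> ha hb e e0.
have e2 : 0 < e / 2 by rewrite divr_gt0.
have [W1 n1 h1] := ha _ e2; have [W2 n2 h2] := hb _ e2.
exists (W1 `&` W2); first exact: filterI.
move=> U cU UW; rewrite mulrDr; apply: (le_lt_trans (nmD _ _)).
have := h1 U cU (fun z Uz => (UW z Uz).1).
have := h2 U cU (fun z Uz => (UW z Uz).2).
lra.
Qed.

Lemma LS_mul a c d : LS a -> LS (c * a * d).
Proof.
move=> ha e e0.
have k0 : 0 < nm c * nm d + 1 by rewrite ltr_wpDl // mulr_ge0 // nm_ge0.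
have [W nW h] := ha _ (divr_gt0 e0 k0).
exists W => // U cU UW.
have -> : p U * (c * a * d) = c * (p U * a) * d.
  by rewrite !mulrA (pr_central hphi c cU).
have hU := h U cU UW.
apply: (le_lt_trans (nmM _ _)).
apply: (le_lt_trans (ler_wpM2r (nm_ge0 d) (nmM _ _))).
have n1 := nm_ge0 c; have n2 := nm_ge0 d; have n3 := nm_ge0 (p U * a).
rewrite ltr_pdivlMr // in hU.
nra.
Qed.

Lemma LS_eq a b : a = b -> LS a -> LS b. Proof. by move=> ->. Qed.

Lemma LS0 : LS 0.
Proof. by move=> e e0; exists setT; [exact: filterT | move=> U _ _; rewrite mulr0 nm0]. Qed.

Definition relx (a b : T) := LS (a - b).

Lemma relx_refl a : relx a a. Proof. by rewrite /relx subrr; exact: LS0. Qed.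
Lemma relx_trans a b c : relx a b -> relx b c -> relx a c.
Proof.
move=> h1 h2; apply: (LS_eq _ (LS_add h1 h2)).
by rewrite addrA subrK.
Qed.
Lemma relx_mul c a b d : relx a b -> relx (c * a * d) (c * b * d).
Proof. by move=> h; apply: (LS_eq _ (LS_mul c d h)); rewrite mulrBr mulrBl. Qed.
Lemma relx_eq a b : a = b -> relx a b. Proof. by move=> ->; exact: relx_refl. Qed.

Lemma nm_sum n (F : 'I_n -> T) : nm (\sum_(i < n) F i) <= \sum_(i < n) nm (F i).
Proof.
elim/big_ind2 : _ => //; first by rewrite nm0.
by move=> a1 b1 a2 b2 h1 h2; apply: (le_trans (nmD _ _)); apply: lerD.
Qed.

Lemma LS_fib (r : T) : fibre_ideal phi x r -> LS r.
Proof.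
move=> hr e e0.
have e2 : 0 < e / 2 by rewrite divr_gt0.
have [n [fs [as_ [hfs hn]]]] := hr _ e2.
pose S := \sum_(i < n) nm (as_ i).
have S0 : 0 <= S by apply: sumr_ge0 => i _; exact: nm_ge0.
pose eta := e / (4 * (S + 1)).
have S1 : 0 < S + 1 by rewrite ltr_wpDl.
have eta0 : 0 < eta by rewrite divr_gt0 // mulr_gt0.
pose W := fun t => forall i : 'I_n,
  `|complex.Re (fs i t)| < eta /\ `|complex.Im (fs i t)| < eta.
have nW : nbhs x W.
  have Fx : Filter (nbhs x) by exact: nbhs_filter.
  have hi : forall i : 'I_n, nbhs x (fun t =>
      `|complex.Re (fs i t)| < eta /\ `|complex.Im (fs i t)| < eta).
    move=> i.
  have [[c1 c2] fx] := hfs i.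
  have h1 : nbhs x (fun t => `|complex.Re (fs i t)| < eta).
    have h := c1 x _ (nbhsx_ballx (complex.Re (fs i x)) eta eta0).
    apply: (@filterS X (nbhs x) Fx _ _ _ h) => t; rewrite /= fx /ball /= sub0r normrN; exact.
  have h2 : nbhs x (fun t => `|complex.Im (fs i t)| < eta).
    have h := c2 x _ (nbhsx_ballx (complex.Im (fs i x)) eta eta0).
    apply: (@filterS X (nbhs x) Fx _ _ _ h) => t; rewrite /= fx /ball /= sub0r normrN; exact.
  by apply: (@filterS X (nbhs x) Fx _ _ _ (@filterI X (nbhs x) Fx _ _ h1 h2)) => t [a b].
  exact: (@filter_forall X 'I_n _ (nbhs x) _ hi).
exists W => // U cU UW.
pose Sg := \sum_(i < n) cs_mul A (phi (fs i)) (as_ i).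
have key : p U * r = p U * (r - Sg) + \sum_(i < n) p U * ((phi (fs i) : T) * as_ i).
  by rewrite -mulr_sumr -mulrDr subrK.
rewrite key; apply: (le_lt_trans (nmD _ _)).
have b1 : nm (p U * (r - Sg)) < e / 2.
  apply: (le_lt_trans (nmM _ _)).
  have := nm_pr cU; have := nm_ge0 (r - Sg); have := nm_ge0 (p U).
  have : nm (r - Sg) < e / 2 by exact: hn.
  nra.
have b2 : \sum_(i < n) nm (p U * ((phi (fs i) : T) * as_ i)) <= 2 * eta * S.
  rewrite /S mulr_sumr; apply: ler_sum => i _.
  rewrite mulrA.
  have [ci _] := hfs i.
  rewrite /pr -(phiM hphi (ccont_chi _ cU) ci).
  apply: (le_trans (nmM _ _)); apply: ler_wpM2r; first exact: nm_ge0.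
  apply: phi_bound => //; first exact: ccontM (ccont_chi _ cU) ci.
  move=> t; rewrite /chi ReM ImM /= !mul0r subr0 addr0 /chiR.
  case: asboolP => Ut; last by rewrite !mul0r normr0; split; exact: ltW.
  rewrite !mul1r; have [h1 h2] := UW t Ut i; split; exact: ltW.
have b3 : 2 * eta * S < e / 2.
  rewrite /eta; rewrite ltr_pdivlMr //.
  have -> : 2 * (e / (4 * (S + 1))) * S * 2 = e * S / (S + 1).
    by field; rewrite gt_eqF.
  by rewrite ltr_pdivrMr // ltr_pM2l // ltrDl.
have := nm_sum (fun i => p U * ((phi (fs i) : T) * as_ i)).
lra.
Qed.
End LocalSmall.
Section Glue.
Variables (R : realType) (A : UCstarAlg R).
Local Notation T := (AR A).
Local Notation st := (@cs_star R A : T -> T).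
Local Notation nm := (@cs_norm R A : T -> R).

Lemma good0 : goodp (0 : T).
Proof. by exists 0, 0; rewrite !mul0r. Qed.

Lemma good_mono (p q : T) : p * q = p -> goodp q -> goodp p.
Proof.
move=> pq [S1 [S2 [h1 h2 h3]]]; exists S1, S2; split.
- by rewrite -{1}pq -mulrA h1 pq.
- by rewrite -{1}pq -mulrA h2 pq.
- by rewrite -{1}pq -mulrA h3 mulr0.
Qed.

Variables (p q : T) (sp : st p = p) (sq : st q = q)
  (pc : forall a, p * a = a * p) (qc : forall a, q * a = a * q)
  (pp : p * p = p) (qq : q * q = q) (pq : p * q = 0).

Let qp : q * p = 0. Proof. by rewrite -pc. Qed.

Let H (r s : T) (x y : T) : r * s = 0 -> x * r * (s * y) = 0.
Proof. by move=> rs; rewrite -mulrA [r * (s * y)]mulrA rs mul0r mulr0. Qed.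

Let Hp (x y : T) : x * p * (p * y) = p * (x * y).
Proof. by rewrite -mulrA [p * (p * y)]mulrA [p * p]pp mulrA -(pc x) mulrA. Qed.
Let Hq (x y : T) : x * q * (q * y) = q * (x * y).
Proof. by rewrite -mulrA [q * (q * y)]mulrA [q * q]qq mulrA -(qc x) mulrA. Qed.

Lemma glue_prod (a b c d : T) :
  (p + q) * (st (p * a + q * b) * (p * c + q * d)) = p * (st a * c) + q * (st b * d).
Proof.
rewrite stD !stM sp sq.
have -> : (st a * p + st b * q) * (p * c + q * d) = p * (st a * c) + q * (st b * d).
  rewrite mulrDl !mulrDr Hp Hq (H _ _ pq) (H _ _ qp).
  by rewrite addr0 add0r.
rewrite mulrDl !mulrDr !mulrA [p * p]pp [q * q]qq [p * q]pq [q * p]qp !mul0r.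
by rewrite addr0 add0r.
Qed.

Lemma good_sum : goodp p -> goodp q -> goodp (p + q).
Proof.
move=> [A1 [A2 [a1 a2 a3]]] [B1 [B2 [b1 b2 b3]]].
exists (p * A1 + q * B1), (p * A2 + q * B2); split.
- by rewrite glue_prod a1 b1.
- by rewrite glue_prod a2 b2.
- by rewrite glue_prod a3 b3 addr0.
Qed.
End Glue.
Local Open Scope classical_set_scope.

Lemma main_aux (R : realType) (X : topologicalType)
  (A : UCstarAlg R) (phi : (X -> R[i]) -> A) :
  compact [set: X] -> hausdorff_space X -> totally_disconnected [set: X] ->
  is_CX_structure phi ->
  (forall x : X, fibre_properly_infinite phi x) ->
  properly_infinite A.
Proof.
move=> cX hX tdX hphi hfib.
pose T := AR A.
pose st := (@cs_star R A : T -> T).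
pose nm := (@cs_norm R A : T -> R).
have prp U : clopen U -> [/\ st (pr phi U) = pr phi U, pr phi U * pr phi U = pr phi U &
    forall a : T, pr phi U * a = a * pr phi U].
  move=> cU; split; [exact: pr_st | exact: pr_idem | move=> a; exact: pr_central].
have good_at : forall x, exists C, [/\ clopen C, C x & goodp (pr phi C)].
  move=> x.
  have [e [f [v [w [[se ee] [sf ff] ef [vv1 vv2] [ww1 ww2]]]]]] := hfib x.
  have F a b : fibre_eq phi x a b -> relx phi x (a : T) b.
    by move=> h; apply: (LS_fib hphi).
  have r1 := F _ _ vv2.
  have r2 := F _ _ ww2.
  have sym a b : relx phi x (a : T) b -> relx phi x b a.
    move=> h; have := LS_mul hphi (-1) 1 h.
    by rewrite mulr1 mulN1r opprB.
  have rr : relx phi x ((v : T) * st w) 0.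
    apply: (relx_trans (b := ((v : T) * st v) * ((v : T) * st w))).
      have := relx_mul hphi 1 ((v : T) * st w) (sym _ _ r1).
      by rewrite !mul1r.
    apply: (relx_trans (b := (v : T) * e * st w)).
      have := relx_mul hphi v (st w) (F _ _ vv1).
      by rewrite !mulrA.
    apply: (relx_trans (b := ((v : T) * e * st w) * ((w : T) * st w))).
      have := relx_mul hphi ((v : T) * e * st w) 1 (sym _ _ r2).
      by rewrite !mulr1.
    apply: (relx_trans (b := (v : T) * e * f * st w)).
      have := relx_mul hphi ((v : T) * e) (st w) (F _ _ ww1).
      by rewrite !mulrA.
    have := relx_mul hphi v (st w) (F _ _ ef).
    by rewrite !mulrA mulr0 mul0r.
  have e0 : (0 : R) < 32^-1 by rewrite invr_gt0.
  have [W1 n1 h1] := r1 _ e0.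
  have [W2 n2 h2] := r2 _ e0.
  have [W3 n3 h3] := rr _ e0.
  have Fx : Filter (nbhs x) by exact: nbhs_filter.
  have nW : nbhs x (W1 `&` W2 `&` W3) by apply: filterI => //; apply: filterI.
  have [C [cC Cx CW]] := clopen_nbhd hX cX tdX nW.
  exists C; split => //.
  have [s1 s2 s3] := prp C cC.
  apply: (local_good s1 s2 s3 (t1 := st v) (t2 := st w)).
  - rewrite stK.
    have -> : pr phi C * ((v : T) * st v) - pr phi C = pr phi C * ((v : T) * st v - 1).
      by rewrite mulrBr mulr1.
    by apply: ltW; apply: h1 => // z /CW [[]].
  - rewrite stK.
    have -> : pr phi C * ((w : T) * st w) - pr phi C = pr phi C * ((w : T) * st w - 1).
      by rewrite mulrBr mulr1.
    by apply: ltW; apply: h2 => // z /CW [[]].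
  - rewrite stK -[(v : T) * st w]subr0; apply: ltW.
    by apply: h3 => // z /CW [].
pose G := [set U : set X | clopen U /\ goodp (pr phi U)].
have [S [cS gS] TS] : exists2 S, G S & [set: X] `<=` S.
  apply: directed_cover => //.
  - split; first exact: clopen0.
    have -> : pr phi set0 = 0.
      rewrite /pr -(phi0 hphi); apply: (phi_ext phi) => t.
      by rewrite /chi /chiR asboolF // rmorph0.
    exact: good0.
  - move=> U V [cU gU] [cV gV].
    pose D := V `&` ~` U.
    have cD : clopen D by apply: clopenI => //; exact: clopenC.
    have gD : goodp (pr phi D).
      apply: (good_mono _ gV); apply: pr_sub => //; by move=> z [].
    have dUD : U `&` D = set0.
      by apply/seteqP; split => // z [Uz [_ nUz]].
    have -> : U `|` V = U `|` D.
      apply/seteqP; split => z.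
      - case=> [Uz|Vz]; first by left.
        by case: (pselect (U z)) => Uz; [left|right].
      - by case=> [Uz|[Vz _]]; [left|right].
    split; first exact: clopenU.
    rewrite pr_union //.
    have [a1 a2 a3] := prp U cU.
    have [b1 b2 b3] := prp D cD.
    exact: (good_sum a1 b1 a3 b3 a2 b2 (pr_disj hphi cU cD dUD) gU gD).
  - by move=> U [[]].
  - move=> y _; have [C [cC Cy gC]] := good_at y.
    by exists C.
have ST : S = setT by apply/seteqP; split.
move: gS; rewrite ST pr_T // => -[S1 [S2 [h1 h2 h3]]].
rewrite !mul1r in h1 h2 h3.
exists (S1 * st S1), (S2 * st S2), (st S1), (st S2).
split.
- split; first by rewrite stM stK.
  by rewrite -[X in X = _]/((S1 * st S1) * (S1 * st S1) : T) mulrA -[S1 * st S1 * S1]mulrA h1 mulr1.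
- split; first by rewrite stM stK.
  by rewrite -[X in X = _]/((S2 * st S2) * (S2 * st S2) : T) mulrA -[S2 * st S2 * S2]mulrA h2 mulr1.
- by rewrite -[X in X = _]/((S1 * st S1) * (S2 * st S2) : T) mulrA -[S1 * st S1 * S2]mulrA h3 mulr0 mul0r.
- by rewrite stK.
- by rewrite stK.
Qed.

Local Close Scope classical_set_scope.
Unset Implicit Arguments.

Theorem proposition6p4 (R : realType) (X : topologicalType)
  (A : UCstarAlg R) (phi : (X -> R[i]) -> A) :
  compact [set: X] -> hausdorff_space X -> totally_disconnected [set: X] ->
  is_CX_structure phi ->
  (forall x : X, fibre_properly_infinite phi x) ->
  properly_infinite A.
Proof. exact: main_aux. Qed.
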